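(* Let $\mathfrak E$ be a tree structure ensemble and $\mathbb V=\mathcal F(\mathfrak E)$. Suppose $f^*\in\mathbb V$, where $f^*(\mathbf x)=f_1(x_1)+f_2(x_2)+\cdots+f_{m'}(x_{m'})$ for some univariate functions $f_1,\dots,f_{m'}$ on $\{1,\dots,B\}$. Then for any feature $1\le i\le m'$ and any knot $t$ of $f_i$, i.e. any value $t$ with $f_i(t)\ne f_i(t+1)$, $\mathbb V$ has full coverage of the split $(i,t)$.
   Context: $\mathcal X=\{1,\dots,B\}^d$. A tree structure is a finite rooted binary tree with axis-aligned splitting rules at internal nodes whose leaves partition $\mathcal X$ into rectangular cells; a tree structure ensemble is a tuple of tree structures, and $\mathcal F(\mathfrak E)$ is the linear span of the indicator functions of all leaves of all its trees (functions on $\mathcal X$). For a coordinate index $i$, write points of $\mathcal X$ as $(\mathbf x^{-i},x_i)$ with $\mathbf x^{-i}\in\{1,\dots,B\}^{d-1}$ the other coordinates, and let $\mathbf e_i$ be the $i$-th coordinate vector. A point $\mathbf x$ is a jump location for $f$ with respect to feature $i$ if $f(\mathbf x)\ne f(\mathbf x+\mathbf e_i)$. For a set $\mathbb V$ of functions, $\mathrm{coverage}(i,t;\mathbb V)=\{\mathbf x^{-i}\in\{1,\dots,B\}^{d-1}: \exists f\in\mathbb V$ such that $(\mathbf x^{-i},t)$ is a jump location for $f$ with respect to feature $i\}$, and $\mathbb V$ has full coverage of the split $(i,t)$ if $\mathrm{coverage}(i,t;\mathbb V)=\{1,\dots,B\}^{d-1}$. *)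

(* Defs.v *)
From HB Require Import structures.
From mathcomp Require Import all_boot all_order all_algebra.
From mathcomp Require Import reals.
Set Implicit Arguments. Unset Strict Implicit. Unset Printing Implicit Defensive.
Import Order.TTheory GRing.Theory Num.Theory.
Local Open Scope ring_scope.

(* Points of R^d-indexed grid: x : 'I_d -> nat; features are 0-indexed
   ('I_d), coordinate values are 1-based as in the paper. *)
Definition point (d : nat) := 'I_d -> nat.

Definition inX (d B : nat) (x : point d) : Prop := forall j : 'I_d, (1 <= x j <= B)%N.

(* Tree structures: axis-aligned splitting rule at internal nodes:
   Node i s l r sends x to l if x_i <= s, to r otherwise. *)
Inductive tree (d : nat) : Type :=
| Leaf : tree d
| Node : 'I_d -> nat -> tree d -> tree d -> tree d.

Fixpoint cells (d : nat) (T : tree d) : seq (point d -> bool) :=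
  match T with
  | Leaf => [:: fun _ => true]
  | Node i s l r =>
      [seq (fun x => (x i <= s)%N && c x) | c <- cells l] ++
      [seq (fun x => (s < x i)%N && c x) | c <- cells r]
  end.

Definition ensemble (d : nat) := seq (tree d).

Definition ens_cells (d : nat) (E : ensemble d) : seq (point d -> bool) :=
  flatten [seq cells T | T <- E].

(* F(E): linear span of the leaf indicator functions, as functions on X. *)
Definition spanF (R : realType) (d B : nat) (E : ensemble d)
    (f : point d -> R) : Prop :=
  exists c : nat -> R, forall x, inX B x ->
    f x = \sum_(k < size (ens_cells E)) c k * ((nth (fun _ => false) (ens_cells E) k) x)%:R.

Definition setc (d : nat) (x : point d) (i : 'I_d) (v : nat) : point d :=
  fun j => if j == i then v else x j.

Definition shift (d : nat) (x : point d) (i : 'I_d) : point d :=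
  setc x i (x i).+1.

Definition jump_loc (R : realType) (d B : nat) (f : point d -> R) (x : point d) (i : 'I_d) : Prop :=
  inX B x /\ inX B (shift x i) /\ f x <> f (shift x i).

(* x^{-i} in {1..B}^{d-1}: represented by a point y whose i-th coordinate is ignored. *)
Definition inXminus (d B : nat) (i : 'I_d) (y : point d) : Prop :=
  forall j : 'I_d, j != i -> (1 <= y j <= B)%N.

Definition coverage (R : realType) (d B : nat) (i : 'I_d) (t : nat)
    (V : (point d -> R) -> Prop) (y : point d) : Prop :=
  inXminus B i y /\ exists f, V f /\ jump_loc B f (setc y i t) i.

Definition full_coverage (R : realType) (d B : nat) (i : 'I_d) (t : nat)
    (V : (point d -> R) -> Prop) : Prop :=
  forall y : point d, inXminus B i y -> coverage B i t V y.

(* Main.v *)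
Require Import Defs.
From HB Require Import structures.
From mathcomp Require Import all_boot all_order all_algebra.
From mathcomp Require Import reals.
Import Order.TTheory GRing.Theory Num.Theory.
Local Open Scope ring_scope.

Theorem lemmaF4 (R : realType) (d B m' : nat) (E : ensemble d)
    (fs : nat -> nat -> R) :
  (m' <= d)%N ->
  spanF B E (fun x : point d => \sum_(j < d | (j < m')%N) fs j (x j)) ->
  forall (i : 'I_d) (t : nat),
    (i < m')%N -> (1 <= t)%N -> (t < B)%N -> fs i t <> fs i t.+1 ->
    full_coverage (R := R) B i t (spanF B E).
Proof.
move=> _ HV i t him ht1 htB hne y hy.
split => //.
exists (fun x : point d => \sum_(j < d | (j < m')%N) fs j (x j)); split => //.
have hs1 : forall j, shift (setc y i t) i j = setc y i t.+1 j.
  by move=> j; rewrite /shift /setc; case: (j == i); rewrite ?eqxx.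
split; last split.
- move=> j; rewrite /setc; case: eqP => [_|/eqP hj]; first by rewrite ht1 ltnW.
  exact: hy.
- move=> j; rewrite hs1 /setc; case: eqP => [_|/eqP hj]; first by [].
  exact: hy.
- move=> heq; apply: hne.
  rewrite (bigD1 i) //= (bigD1 i (P := fun j : 'I_d => (j < m')%N)) //= in heq.
  have A1 : setc y i t i = t by rewrite /setc eqxx.
  have A2 : shift (setc y i t) i i = t.+1 by rewrite hs1 /setc eqxx.
  have E2 : \sum_(j < d | (j < m')%N && (j != i)) fs j (shift (setc y i t) i j)
          = \sum_(j < d | (j < m')%N && (j != i)) fs j (setc y i t j).
    apply: eq_bigr => j /andP [_ hj]; rewrite hs1 /setc.
    by rewrite (negbTE hj).
  rewrite E2 A1 A2 in heq.
  exact: (addIr _ heq).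
Qed.
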